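(* For every backward trie $\mathsf{T}_b$ with $n$ nodes, $\mathsf{CDAWG}(\mathsf{T}_b)$ has at most $2n-3$ nodes and at most $2n-4$ edges, independently of the alphabet size.
   Context: An alphabet $\Sigma$ is a finite ordered set of characters. A forward trie $\mathsf{T}_f$ is a rooted tree with $n$ nodes in which every edge is directed from parent to child and labeled by a single character of $\Sigma$, such that the edges leaving any node carry pairwise distinct labels. The backward trie $\mathsf{T}_b$ is obtained from $\mathsf{T}_f$ by reversing the direction of every edge while keeping its label; it has the same nodes and root $r$. For nodes $u,v$ with $u$ an ancestor of $v$ (possibly $u=v$), $\mathrm{str}_b(v,u)$ is the string of labels read along the reversed (upward) path from $v$ to $u$. Define $\mathrm{Substr}(\mathsf{T}_b)=\{\mathrm{str}_b(v,u): u \text{ an ancestor of } v\}$. A string $Y\in\mathrm{Substr}(\mathsf{T}_b)$ is left-maximal on $\mathsf{T}_b$ if either there are distinct characters $a\ne b$ with $aY,bY\in\mathrm{Substr}(\mathsf{T}_b)$, or $Y=\mathrm{str}_b(\ell,u)$ for some leaf $\ell$; it is right-maximal on $\mathsf{T}_b$ if either there are distinct $a\ne b$ with $Ya,Yb\in\mathrm{Substr}(\mathsf{T}_b)$, or $Y=\mathrm{str}_b(v,r)$ for some node $v$; it is maximal if it is both. For $Y\in\mathrm{Substr}(\mathsf{T}_b)$ let $\mathrm{mx}_b(Y)$ be the shortest maximal string on $\mathsf{T}_b$ of the form $\gamma Y\delta$ with $\gamma,\delta\in\Sigma^*$. Two substrings $Y,Y'$ are equivalent iff $\mathrm{mx}_b(Y)=\mathrm{mx}_b(Y')$.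 $\mathsf{CDAWG}(\mathsf{T}_b)$ is the edge-labeled DAG whose nodes are these equivalence classes; for each class $C$ with representative $M=\mathrm{mx}_b(Y)$ ($Y\in C$) and each character $a$ with $Ma\in\mathrm{Substr}(\mathsf{T}_b)$ there is exactly one edge leaving $C$ whose label begins with $a$ (it leads to the class of $Ma$ and is labeled $a\beta$, where $Ma\beta$ is the shortest right-maximal string on $\mathsf{T}_b$ having $Ma$ as a prefix), and there are no other edges. *)

(* Defs.v *)
From mathcomp Require Import all_boot.
Set Implicit Arguments. Unset Strict Implicit. Unset Printing Implicit Defensive.

(* A forward trie with n nodes is encoded by its node set 'I_n, a root r,
   a parent map par (par r = r) and, for every non-root node v, the label
   lab v of the edge par v -> v.  lab r is irrelevant. *)
Definition is_trie (Sigma : finType) (n : nat) (par : 'I_n -> 'I_n)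
    (lab : 'I_n -> Sigma) (r : 'I_n) : Prop :=
  [/\ par r = r,
      (forall v, exists k, iter k par v = r) &
      (forall u v, u != r -> v != r -> par u = par v -> lab u = lab v -> u = v)].

Section BackwardTrie.
Variables (Sigma : finType) (n : nat) (par : 'I_n -> 'I_n)
          (lab : 'I_n -> Sigma) (r : 'I_n).

Definition upath (v : 'I_n) (k : nat) : Prop :=
  forall i, i < k -> iter i par v != r.

(* str_b(v, u) where u = iter k par v *)
Definition strb (v : 'I_n) (k : nat) : seq Sigma :=
  [seq lab (iter i par v) | i <- iota 0 k].

Definition substr (Y : seq Sigma) : Prop :=
  exists v k, upath v k /\ Y = strb v k.

Definition is_leaf (l : 'I_n) : Prop := forall w, w != r -> par w != l.

Definition left_maximal (Y : seq Sigma) : Prop :=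
  substr Y /\
  ((exists a b : Sigma, a != b /\ substr (a :: Y) /\ substr (b :: Y)) \/
   (exists l k, is_leaf l /\ upath l k /\ Y = strb l k)).

Definition right_maximal (Y : seq Sigma) : Prop :=
  substr Y /\
  ((exists a b : Sigma, a != b /\ substr (rcons Y a) /\ substr (rcons Y b)) \/
   (exists v k, upath v k /\ iter k par v = r /\ Y = strb v k)).

Definition maximal (Y : seq Sigma) : Prop := left_maximal Y /\ right_maximal Y.

Definition is_mx (M Y : seq Sigma) : Prop :=
  [/\ maximal M, infix Y M &
      forall M', maximal M' -> infix Y M' -> size M <= size M'].

(* nodes of CDAWG(T_b), each class represented by its string mx_b(Y) *)
Definition cdawg_node (M : seq Sigma) : Prop :=
  exists Y, substr Y /\ is_mx M Y.

Definition shortest_rmax_ext (P Q : seq Sigma) : Prop :=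
  [/\ right_maximal Q, prefix P Q &
      forall Q', right_maximal Q' -> prefix P Q' -> size Q <= size Q'].

(* edges of CDAWG(T_b): (source node M, label a beta, target node mx_b(Ma)) *)
Definition cdawg_edge (e : seq Sigma * seq Sigma * seq Sigma) : Prop :=
  let: (M, lbl, M') := e in
  exists (a : Sigma) (beta : seq Sigma),
    [/\ lbl = a :: beta, cdawg_node M, substr (rcons M a),
        shortest_rmax_ext (rcons M a) (rcons M a ++ beta) &
        is_mx M' (rcons M a)].

End BackwardTrie.

(* Main.v *)
Require Import Defs.
From mathcomp Require Import all_boot.
From Stdlib Require Import Classical ClassicalEpsilon.
From mathcomp Require Import zify.
Set Implicit Arguments. Unset Strict Implicit. Unset Printing Implicit Defensive.

Lemma infix_eq_size (T : eqType) (s t : seq T) : infix s t -> size t <= size s -> s = t.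
Proof.
move=> /infixP[x [z ->]]; rewrite !size_cat => H.
have Hx : size x = 0 by lia.
have Hz : size z = 0 by lia.
by move/eqP: Hx; rewrite size_eq0 => /eqP->; move/eqP: Hz; rewrite size_eq0 => /eqP->; rewrite cats0.
Qed.

Section S1.
Variables (Sigma : finType) (n : nat) (par : 'I_n -> 'I_n)
          (lab : 'I_n -> Sigma) (r : 'I_n).

Local Notation strb := (strb par lab).
Local Notation upath := (upath par r).
Local Notation substr := (substr par lab r).

Lemma size_strb v k : size (strb v k) = k.
Proof. by rewrite /Defs.strb size_map size_iota. Qed.

Lemma strbD v i j : strb v (i + j) = strb v i ++ strb (iter i par v) j.
Proof.
rewrite /Defs.strb iotaD map_cat add0n; congr (_ ++ _).
rewrite -{1}(addn0 i) iotaDl -map_comp; apply: eq_map => k /=.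
by rewrite addnC iterD.
Qed.

Lemma upathD v i j : upath v (i + j) -> upath (iter i par v) j.
Proof. by move=> H k Hk; rewrite -iterD; apply: H; rewrite addnC ltn_add2l. Qed.

Lemma upath_le v k j : upath v k -> j <= k -> upath v j.
Proof. by move=> H Hj i Hi; apply: H; apply: leq_trans Hj. Qed.

Lemma strb_split v k x y z : x ++ y ++ z = strb v k ->
  y = strb (iter (size x) par v) (size y) /\ k = size x + size y + size z.
Proof.
move=> H.
have Hk : k = size x + size y + size z.
  by rewrite -(size_strb v k) -H !size_cat addnA.
split=> //; move: H; rewrite Hk -addnA strbD strbD => H.
have := congr1 (drop (size x)) H.
rewrite !drop_size_cat ?size_strb // => H2.
have := congr1 (take (size y)) H2.
by rewrite !take_size_cat ?size_strb.
Qed.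

Lemma substr_infix x y z : substr (x ++ y ++ z) -> substr y.
Proof.
case=> v [k [Hu Hs]]; have [Hy Hk] := strb_split Hs.
exists (iter (size x) par v), (size y); split=> //.
apply: (@upath_le _ (size y + size z)); last exact: leq_addr.
by apply: upathD; rewrite addnA -Hk.
Qed.

Lemma substr_inf Y M : infix Y M -> substr M -> substr Y.
Proof. by move=> /infixP[x [z ->]]; apply: substr_infix. Qed.

Lemma lmax_pre Y d : left_maximal par lab r (Y ++ d) -> left_maximal par lab r Y.
Proof.
case=> HS [[a [b [Hab [Ha Hb]]]]|[l [k [Hl [Hu Hs]]]]].
- split; first by apply: (@substr_infix [::] _ d).
  left; exists a, b; split=> //; split.
  + by apply: (@substr_infix [::] _ d).
  + by apply: (@substr_infix [::] _ d).
- split; first by apply: (@substr_infix [::] _ d).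
  right; have := @strb_split l k [::] Y d Hs; rewrite /= => -[HY Hk].
  exists l, (size Y); split=> //; split=> //.
  by apply: upath_le Hu _; rewrite Hk /= add0n leq_addr.
Qed.

Lemma rmax_suf g Y : right_maximal par lab r (g ++ Y) -> right_maximal par lab r Y.
Proof.
case=> HS [[a [b [Hab [Ha Hb]]]]|[v [k [Hu [Hr Hs]]]]].
- split; first by apply: (@substr_infix g _ [::]); rewrite cats0.
  left; exists a, b; split=> //; split.
  + by apply: (@substr_infix g _ [::]); rewrite cats0 -rcons_cat.
  + by apply: (@substr_infix g _ [::]); rewrite cats0 -rcons_cat.
- split; first by apply: (@substr_infix g _ [::]); rewrite cats0.
  right; have := @strb_split v k g Y [::]; rewrite cats0 => /(_ Hs) [HY Hk].
  rewrite addn0 in Hk.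
  exists (iter (size g) par v), (size Y); split; last split=> //.
  + by apply: upathD; rewrite -Hk.
  + by rewrite -iterD addnC -Hk.
Qed.

Lemma max_substr M : maximal par lab r M -> substr M.
Proof. by case=> -[]. Qed.

End S1.

Section S2.
Variables (Sigma : finType) (n : nat) (par : 'I_n -> 'I_n)
          (lab : 'I_n -> Sigma) (r : 'I_n).

Local Notation substr := (substr par lab r).
Local Notation maximal := (maximal par lab r).
Local Notation is_mx := (is_mx par lab r).

Lemma lmax_ext M Y : maximal M -> infix Y M -> ~ left_maximal par lab r Y ->
  exists c, infix (c :: Y) M /\ substr (c :: Y).
Proof.
move=> HM /infixP[g [d HMe]] HnL.
case/lastP: g HMe => [|g c] HMe.
  by case: HnL; case: HM => HL _; apply: (@lmax_pre _ _ _ _ _ _ d); rewrite /= in HMe; rewrite -HMe.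
rewrite cat_rcons in HMe; exists c; split.
  by apply/infixP; exists g, d.
by apply: (@substr_infix _ _ _ _ _ g _ d); rewrite -HMe; apply: max_substr.
Qed.

Lemma rmax_ext M Y : maximal M -> infix Y M -> ~ right_maximal par lab r Y ->
  exists c, infix (rcons Y c) M /\ substr (rcons Y c).
Proof.
move=> HM /infixP[g [d HMe]] HnR.
case: d HMe => [|c d] HMe.
  by case: HnR; case: HM => _ HR; apply: (@rmax_suf _ _ _ _ _ g); rewrite cats0 in HMe; rewrite -HMe.
have HMe' : M = g ++ rcons Y c ++ d by rewrite cat_rcons.
exists c; split.
  by apply/infixP; exists g, d.
by apply: (@substr_infix _ _ _ _ _ g _ d); rewrite -HMe'; apply: max_substr.
Qed.

Lemma is_mx_trans M Y Y' : is_mx M Y -> infix Y' M -> infix Y Y' -> is_mx M Y'.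
Proof.
case=> Hm HI Hmin HI' HYY'; split=> // M' HM' HI2.
by apply: Hmin => //; apply: infix_trans HYY' HI2.
Qed.

Lemma mx_uniq d : forall Y M1 M2, size M1 <= d + size Y ->
  is_mx M1 Y -> is_mx M2 Y -> M1 = M2.
Proof.
elim: d => [|d IH] Y M1 M2 Hs H1 H2.
- have [_ I1 m1] := H1; have [_ I2 m2] := H2.
  have E1 : Y = M1 by apply: infix_eq_size.
  have s21 : size M2 <= size M1 by apply: m2; case: H1.
  have E2 : Y = M2 by apply: infix_eq_size => //; apply: leq_trans s21 _.
  by rewrite -E1 -E2.
- have [X1 I1 m1] := H1; have [X2 I2 m2] := H2.
  have s21 : size M2 <= size M1 by apply: m2.
  have s12 : size M1 <= size M2 by apply: m1.
  have [Hle|Hgt] := leqP (size M1) (size Y).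
    have E1 : Y = M1 by apply: infix_eq_size.
    have E2 : Y = M2 by apply: infix_eq_size => //; apply: leq_trans s21 _.
    by rewrite -E1 -E2.
  have SY : substr Y by apply: substr_inf I1 _; apply: max_substr.
  have [HmY|HnY] := classic (maximal Y).
    by have := m1 _ HmY (infix_refl Y); rewrite leqNgt Hgt.
  have [HnL|HnR] : ~ left_maximal par lab r Y \/ ~ right_maximal par lab r Y.
    by apply: not_and_or.
  + have [c [Ic Sc]] := lmax_ext X1 I1 HnL.
    have [c' [Ic' Sc']] := lmax_ext X2 I2 HnL.
    have Ecc : c = c'.
      apply: NNPP => Hne; apply: HnL; split=> //; left.
      by exists c, c'; split=> //; apply/eqP.
    subst c'.
    apply: (IH (c :: Y)).
    * by rewrite /= addnS.
    * by apply: is_mx_trans H1 Ic (infix_cons _ _).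
    * by apply: is_mx_trans H2 Ic' (infix_cons _ _).
  + have [c [Ic Sc]] := rmax_ext X1 I1 HnR.
    have [c' [Ic' Sc']] := rmax_ext X2 I2 HnR.
    have Ecc : c = c'.
      apply: NNPP => Hne; apply: HnR; split=> //; left.
      by exists c, c'; split=> //; apply/eqP.
    subst c'.
    apply: (IH (rcons Y c)).
    * by rewrite size_rcons addnS.
    * by apply: is_mx_trans H1 Ic (infix_rcons _ _).
    * by apply: is_mx_trans H2 Ic' (infix_rcons _ _).
Qed.

End S2.

Section Comb.
Variable T : eqType.

Definition inR (L : seq (seq T)) (Y : seq T) : Prop :=
  Y \in L \/ exists a b : T, a != b /\ (exists2 w, w \in L & prefix (rcons Y a) w)
                        /\ (exists2 w, w \in L & prefix (rcons Y b) w).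

Lemma prefix_cmp (p q w : seq T) : prefix p w -> prefix q w -> size p <= size q -> prefix p q.
Proof.
rewrite !prefixE => /eqP Hp /eqP Hq Hs.
by rewrite -Hq take_takel // Hp.
Qed.

Lemma prefix_same (p q w : seq T) : prefix p w -> prefix q w -> size p = size q -> p = q.
Proof.
move=> Hp Hq Hs; have := prefix_cmp Hp Hq; rewrite Hs leqnn => /(_ isT).
by rewrite prefixE Hs take_size => /eqP.
Qed.

Lemma rcons_pref_eq (Y : seq T) a b w : prefix (rcons Y a) w -> prefix (rcons Y b) w -> a = b.
Proof.
move=> Ha Hb; have := prefix_same Ha Hb; rewrite !size_rcons => /(_ erefl) E.
by have := congr1 (last a) E; rewrite !last_rcons.
Qed.

Definition New L x Y := [/\ inR (x :: L) Y, ~ inR L Y & Y <> x].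

Lemma newP L x Y : New L x Y -> exists c, [/\ prefix (rcons Y c) x,
  (exists2 w, w \in L & prefix Y w) & (forall w, w \in L -> ~~ prefix (rcons Y c) w)].
Proof.
case=> [[HY|[a [b [Hab [[w1 Hw1 P1] [w2 Hw2 P2]]]]]] HnL Hnx].
  rewrite in_cons in HY; case/orP: HY => [/eqP //|HY]; by case: HnL; left.
rewrite in_cons in Hw1 Hw2.
case/orP: Hw1 => [/eqP E1|Hw1]; case/orP: Hw2 => [/eqP E2|Hw2].
- subst; by move: Hab; rewrite (rcons_pref_eq P1 P2) eqxx.
- subst w1; exists a; split=> //.
    by exists w2 => //; apply: prefix_trans P2; apply: prefix_rcons.
  move=> w Hw; apply/negP => Pw; apply: HnL; right; exists a, b; split=> //.
  by split; [exists w | exists w2].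
- subst w2; exists b; split=> //.
    by exists w1 => //; apply: prefix_trans P1; apply: prefix_rcons.
  move=> w Hw; apply/negP => Pw; apply: HnL; right; exists a, b; split=> //.
  by split; [exists w1 | exists w].
- by case: HnL; right; exists a, b; split=> //; split; [exists w1 | exists w2].
Qed.

Lemma new_lt L x Y1 Y2 : New L x Y1 -> New L x Y2 -> size Y1 < size Y2 -> False.
Proof.
move=> /newP[c1 [P1 _ N1]] /newP[c2 [P2 [w2 Hw2 Q2] _]] Hs.
have PY2 : prefix Y2 x by apply: prefix_trans P2; apply: prefix_rcons.
have : prefix (rcons Y1 c1) Y2 by apply: prefix_cmp P1 PY2 _; rewrite size_rcons.
by move=> H; move: (N1 _ Hw2); rewrite (prefix_trans H Q2).
Qed.

Lemma new_uniq L x Y1 Y2 : New L x Y1 -> New L x Y2 -> Y1 = Y2.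
Proof.
move=> H1 H2; case: (ltngtP (size Y1) (size Y2)) => Hs.
- by case: (new_lt H1 H2 Hs).
- by case: (new_lt H2 H1 Hs).
- have /newP[c1 [P1 _ _]] := H1; have /newP[c2 [P2 _ _]] := H2.
  apply: prefix_same Hs.
  + by apply: prefix_trans P1; apply: prefix_rcons.
  + by apply: prefix_trans P2; apply: prefix_rcons.
Qed.

Lemma ins L x : exists y, forall Y, inR (x :: L) Y -> inR L Y \/ Y = x \/ Y = y.
Proof.
have [[y Hy]|Hn] := classic (exists Y, New L x Y).
- exists y => Y HY; have [//|HnL] := classic (inR L Y); first by left.
  have [->|Hnx] := classic (Y = x); first by right; left.
  by right; right; apply: new_uniq Hy; split.
- exists x => Y HY; have [//|HnL] := classic (inR L Y); first by left.
  have [->|Hnx] := classic (Y = x); first by right; left.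
  by case: Hn; exists Y; split.
Qed.

Lemma cover L0 (C0 : seq (seq T)) rest : (forall Y, inR L0 Y -> Y \in C0) ->
  exists C, size C <= size C0 + 2 * size rest /\ forall Y, inR (rest ++ L0) Y -> Y \in C.
Proof.
move=> H0; elim: rest => [|x rest [C [HC HCY]]].
  by exists C0; rewrite addn0.
have [y Hy] := ins (rest ++ L0) x.
exists (x :: y :: C); split.
  by rewrite /= mulnS addnCA -add2n leq_add2l.
move=> Y HY; case: (Hy Y HY) => [H|[->|->]].
- by rewrite !in_cons (HCY _ H) !orbT.
- by rewrite in_cons eqxx.
- by rewrite !in_cons eqxx orbT.
Qed.

Lemma base3 (a b : T) t1 t2 Y : a != b ->
  inR [:: [::]; a :: t1; b :: t2] Y -> Y \in [:: [::]; a :: t1; b :: t2].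
Proof.
move=> Hab [//|[a' [b' [Hab' [[w1 Hw1 P1] [w2 Hw2 P2]]]]]].
case: Y P1 P2 => [|c Y] P1 P2; first by rewrite in_cons eqxx.
have key : forall w d, w \in [:: [::]; a :: t1; b :: t2] -> prefix (rcons (c :: Y) d) w ->
   (w = a :: t1 /\ c = a) \/ (w = b :: t2 /\ c = b).
  move=> w d; rewrite !in_cons orbF => /or3P[] /eqP -> //=.
    by case/andP => /eqP -> _; left.
  by case/andP => /eqP -> _; right.
case: (key _ _ Hw1 P1) => [[E1 C1]|[E1 C1]]; case: (key _ _ Hw2 P2) => [[E2 C2]|[E2 C2]].
- by subst; move: Hab'; rewrite (rcons_pref_eq P1 P2) eqxx.
- by move: Hab; rewrite -C1 -C2 eqxx.
- by move: Hab; rewrite -C1 -C2 eqxx.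
- by subst; move: Hab'; rewrite (rcons_pref_eq P1 P2) eqxx.
Qed.

Lemma pathcase L (a : T) Y : (forall w, w \in L -> all (pred1 a) w) -> inR L Y -> Y \in L.
Proof.
move=> Ha [//|[a' [b' [Hab' [[w1 Hw1 P1] [w2 Hw2 P2]]]]]].
have m1 : a' \in w1 by apply: (mem_infix (prefixW P1)); rewrite mem_rcons in_cons eqxx.
have m2 : b' \in w2 by apply: (mem_infix (prefixW P2)); rewrite mem_rcons in_cons eqxx.
move: (allP (Ha _ Hw1) _ m1) (allP (Ha _ Hw2) _ m2) => /= /eqP E1 /eqP E2.
by move: Hab'; rewrite E1 E2 eqxx.
Qed.

End Comb.

Section S4.
Variables (Sigma : finType) (n : nat) (par : 'I_n -> 'I_n)
          (lab : 'I_n -> Sigma) (r : 'I_n).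
Hypothesis Hroot : forall v, exists k, iter k par v = r.

Local Notation strb := (strb par lab).
Local Notation upath := (upath par r).
Local Notation substr := (substr par lab r).

Lemma Hex v : exists k, iter k par v == r.
Proof. by have [k Hk] := Hroot v; exists k; apply/eqP. Qed.

Definition dep v := ex_minn (Hex v).

Lemma depP v : iter (dep v) par v = r /\ forall k, iter k par v = r -> dep v <= k.
Proof.
rewrite /dep; case: ex_minnP => m /eqP Hm Hmin; split=> // k Hk.
by apply: Hmin; apply/eqP.
Qed.

Definition sv v := strb v (dep v).

Lemma dep_upath v k : upath v k -> k <= dep v.
Proof.
move=> Hu; rewrite leqNgt; apply/negP => Hlt.
by move: (Hu _ Hlt); rewrite (depP v).1 eqxx.
Qed.

Lemma upath_dep v : upath v (dep v).
Proof.
move=> i Hi; apply/negP => /eqP Hr.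
by have := (depP v).2 _ Hr; rewrite leqNgt Hi.
Qed.

Lemma substr_pref Y : substr Y -> exists v, prefix Y (sv v).
Proof.
case=> v [k [Hu ->]]; exists v.
have Hk := dep_upath Hu.
by rewrite /sv -(subnKC Hk) strbD prefix_prefix.
Qed.

Lemma root_sv v k : upath v k -> iter k par v = r -> strb v k = sv v.
Proof.
move=> Hu Hr; have H1 := dep_upath Hu; have H2 := (depP v).2 _ Hr.
by rewrite /sv; congr strb; apply/eqP; rewrite eqn_leq H1 H2.
Qed.

Lemma sv_r : sv r = [::].
Proof.
have := (depP r).2 0 erefl; rewrite leqn0 => /eqP.
by rewrite /sv => ->.
Qed.

Lemma sv_nonroot v : v != r -> exists t, sv v = lab v :: t.
Proof.
move=> Hv.
have Hd : 0 < dep v.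
  rewrite lt0n; apply/negP => /eqP H0.
  by have := (depP v).1; rewrite H0 /= => E; move: Hv; rewrite E eqxx.
exists (strb (iter 1 par v) (dep v - 1)).
by rewrite /sv -(subnKC Hd) strbD subnKC // -addn1 addKn.
Qed.

Lemma sv_labels v x : x \in sv v -> exists w, w != r /\ x = lab w.
Proof.
rewrite /sv /Defs.strb => /mapP[i]; rewrite mem_iota add0n => /andP[_ Hi] ->.
by exists (iter i par v); split=> //; apply: upath_dep.
Qed.

Lemma rmax_inR L Y : (forall v, sv v \in L) -> right_maximal par lab r Y -> inR L Y.
Proof.
move=> HL [HS [[a [b [Hab [Ha Hb]]]]|[v [k [Hu [Hr ->]]]]]].
- right; exists a, b; split=> //.
  have [va Pa] := substr_pref Ha; have [vb Pb] := substr_pref Hb.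
  by split; [exists (sv va) | exists (sv vb)].
- by left; rewrite (root_sv Hu Hr).
Qed.


Lemma exC : 3 <= n -> exists L C, [/\ (forall v, sv v \in L), size C <= 2 * n - 3 &
  (forall Y, inR L Y -> Y \in C)].
Proof.
move=> Hn.
have [[v1 [v2 [H1 H2 H12]]]|Hno] :=
  classic (exists v1 v2, [/\ v1 != r, v2 != r & lab v1 != lab v2]).
- have [t1 E1] := sv_nonroot H1; have [t2 E2] := sv_nonroot H2.
  pose L0 := [:: [::]; sv v1; sv v2].
  have HB : forall Y, inR L0 Y -> Y \in L0.
    by rewrite /L0 E1 E2 => Y; apply: base3.
  pose rest := [seq sv v | v <- enum [predC [:: r; v1; v2]]].
  have [C [HC HCY]] := cover rest HB.
  have Hu : uniq [:: r; v1; v2].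
    rewrite /= !in_cons !in_nil !orbF !andbT negb_or eq_sym H1 eq_sym H2 /=.
    by apply/eqP => E; move: H12; rewrite E eqxx.
  have Hrest : size rest = n - 3.
    rewrite size_map -cardE.
    have Hc : #|[:: r; v1; v2]| = 3 by apply/card_uniqP.
    have := cardC (mem [:: r; v1; v2]); rewrite card_ord Hc.
    by move=> E; rewrite -[X in X - 3]E addKn.
  exists (rest ++ L0), C; split=> //.
  + move=> v; rewrite mem_cat; have [Hv|Hv] := boolP (v \in [:: r; v1; v2]).
      move: Hv; rewrite !inE => /or3P[] /eqP ->.
      * by rewrite sv_r eqxx !orbT.
      * by rewrite eqxx !orbT.
      * by rewrite eqxx !orbT.
    apply/orP; left; apply: map_f; rewrite mem_enum inE /=; exact: Hv.
  + move: HC; rewrite Hrest /L0 /=; lia.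
- have Hw0 : exists w0, w0 != r.
    have Hn0 : 0 < n by apply: leq_trans Hn.
    have Hn1 : 1 < n by apply: leq_trans Hn.
    case E: (Ordinal Hn0 == r); last by exists (Ordinal Hn0); rewrite E.
    by exists (Ordinal Hn1); move/eqP: E => <-.
  have [w0 Hw0r] := Hw0.
  have Hall : forall w, w != r -> lab w = lab w0.
    move=> w Hw; apply: NNPP => Hne; apply: Hno; exists w, w0; split=> //.
    by apply/eqP.
  pose L := [seq sv v | v <- enum 'I_n].
  exists L, L; split=> //.
  + by move=> v; apply: map_f; rewrite mem_enum.
  + rewrite size_map size_enum_ord; lia.
  + move=> Y; apply: (@pathcase _ _ (lab w0)) => w /mapP[v _ ->].
    apply/allP => x /sv_labels[w' [Hw' ->]] /=.
    by rewrite Hall.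
Qed.


Definition key (e : seq Sigma * seq Sigma * seq Sigma) := e.1.1 ++ e.1.2.

Lemma key_lt M1 a1 b1 M2 a2 b2 :
  shortest_rmax_ext par lab r (rcons M1 a1) (rcons M1 a1 ++ b1) ->
  right_maximal par lab r M2 ->
  M1 ++ a1 :: b1 = M2 ++ a2 :: b2 -> size M1 < size M2 -> False.
Proof.
case=> _ _ Hmin HM2 E Hs.
have P1 : prefix (rcons M1 a1) (M1 ++ a1 :: b1) by rewrite -cat_rcons prefix_prefix.
have P2 : prefix M2 (M1 ++ a1 :: b1) by rewrite E prefix_prefix.
have P : prefix (rcons M1 a1) M2 by apply: prefix_cmp P1 P2 _; rewrite size_rcons.
have := Hmin _ HM2 P; rewrite cat_rcons E size_cat /=.
by rewrite addnS ltnNge leq_addr.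
Qed.

Lemma key_inj e1 e2 : cdawg_edge par lab r e1 -> cdawg_edge par lab r e2 ->
  key e1 = key e2 -> e1 = e2.
Proof.
case: e1 => [[M1 l1] N1] [a1 [b1 [-> [Y1 [_ [[_ HR1] _ _]]] _ S1 X1]]].
case: e2 => [[M2 l2] N2] [a2 [b2 [-> [Y2 [_ [[_ HR2] _ _]]] _ S2 X2]]].
rewrite /key /= => E.
have Hs : size M1 = size M2.
  case: (ltngtP (size M1) (size M2)) => // Hs.
  - by case: (key_lt S1 HR2 E Hs).
  - by case: (key_lt S2 HR1 (esym E) Hs).
have EM : M1 = M2.
  by have := congr1 (take (size M1)) E; rewrite take_size_cat // take_size_cat.
subst M2; have := congr1 (drop (size M1)) E; rewrite !drop_size_cat // => -[Ea Eb].
subst a2 b2.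
by rewrite (@mx_uniq _ _ _ _ _ (size N1) (rcons M1 a1) N1 N2 (leq_addr _ _) X1 X2).
Qed.

Lemma main_aux : 3 <= n ->
  (exists s : seq (seq Sigma),
      size s <= 2 * n - 3 /\ forall M, cdawg_node par lab r M -> M \in s) /\
  (exists s : seq (seq Sigma * seq Sigma * seq Sigma),
      size s <= 2 * n - 4 /\ forall e, cdawg_edge par lab r e -> e \in s).
Proof.
move=> Hn; have [L [C [HL HC HCY]]] := exC Hn.
have Rin : forall Y, right_maximal par lab r Y -> Y \in C.
  by move=> Y HY; apply: HCY; apply: rmax_inR.
split.
  exists C; split=> // M [Y [_ [[_ HR] _ _]]]; exact: Rin.
have eps_in : [::] \in C by apply: HCY; left; rewrite -sv_r.
pose C' := [seq Q <- C | Q != [::]].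
have HC' : size C' <= 2 * n - 4.
  have H1 : size C' < size C.
    rewrite /C' size_filter -(count_predC (fun Q : seq Sigma => Q != [::]) C) -addn1 leq_add2l.
    rewrite -has_count; apply/hasP; exists [::] => //=.
  by move: H1 HC; lia.
pose dummy : seq Sigma * seq Sigma * seq Sigma := ([::], [::], [::]).
pose pickE Q := epsilon (inhabits dummy) (fun e => cdawg_edge par lab r e /\ key e = Q).
exists [seq pickE Q | Q <- C']; split; first by rewrite size_map.
move=> e He.
have Hk : key e \in C'.
  case: e He => [[M l] N] He; have He' := He.
  case: He' => a [b [El _ _ [HR _ _] _]].
  rewrite mem_filter /key /= El; apply/andP; split; first by case: M {He El HR}.
  by apply: Rin; rewrite -cat_rcons.
have Hp : cdawg_edge par lab r (pickE (key e)) /\ key (pickE (key e)) = key e.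
  by apply: (epsilon_spec (inhabits dummy) (fun e0 => cdawg_edge par lab r e0 /\ key e0 = key e)); exists e.
have -> : e = pickE (key e) by apply: key_inj He Hp.1 (esym Hp.2).
exact: map_f.
Qed.

End S4.

Theorem theorem8 (Sigma : finType) (n : nat) (par : 'I_n -> 'I_n)
    (lab : 'I_n -> Sigma) (r : 'I_n) :
  3 <= n -> is_trie par lab r ->
  (exists s : seq (seq Sigma),
      size s <= 2 * n - 3 /\ forall M, cdawg_node par lab r M -> M \in s) /\
  (exists s : seq (seq Sigma * seq Sigma * seq Sigma),
      size s <= 2 * n - 4 /\ forall e, cdawg_edge par lab r e -> e \in s).
Proof.
move=> Hn [_ Hroot _]; exact: (@main_aux Sigma n par lab r Hroot Hn).
Qed.
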